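(* In the setting described in the context, the probability $\Pr(y)=|\phi_k(y)|^2$ of observing $y\in\{0,1,\dots,N-1\}$ after the Amplified-QFT is given exactly by: (A) if $y=0$: $\Pr(y)=\cos^2(2k\theta)$; (B) if $Py\equiv 0 \pmod N$ and $y\neq 0$: $\Pr(y)=\tan^2\theta\,\sin^2(2k\theta)$; (C) if $Py\not\equiv 0\pmod N$ and $MPy\not\equiv 0 \pmod N$: $\Pr(y)=\dfrac{1}{M^2}\tan^2\theta\,\sin^2(2k\theta)\,\dfrac{\sin^2(\pi MPy/N)}{\sin^2(\pi Py/N)}$; (D) if $Py\not\equiv 0\pmod N$ and $MPy\equiv 0\pmod N$: $\Pr(y)=0$.
   Context: Setting: $N\ge 2$ is an integer, $\mathcal L=\{0,1,\dots,N-1\}$, and $s\ge 0$, $P\ge 1$, $M\ge 1$ are integers with $M<N$ and $s+(M-1)P\le N-1$; $A=\{s+rP: r=0,1,\dots,M-1\}\subset\mathcal L$ (so $|A|=M$). Let $\omega=e^{-2\pi i/N}$. Let $\theta\in(0,\pi/2)$ be defined by $\sin\theta=\sqrt{M/N}$ (so $\cos\theta=\sqrt{1-M/N}$), and $k=\lfloor \pi/(4\theta)\rfloor$. Put $a_k=\frac{1}{\sqrt M}\sin((2k+1)\theta)$, $b_k=\frac{1}{\sqrt{N-M}}\cos((2k+1)\theta)$, and let $\psi_k\in\mathbb C^N$ be the state with $\psi_k(z)=a_k$ for $z\in A$ and $\psi_k(z)=b_k$ for $z\notin A$ (this is the state produced by $k$ Grover iterations for the marked set $A$). The quantum Fourier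 transform is applied: $\phi_k(y)=\frac{1}{\sqrt N}\sum_{z=0}^{N-1}\psi_k(z)\omega^{zy}$, and $\Pr(y)=|\phi_k(y)|^2$. *)

(* Defs.v *)
From Stdlib Require Import Reals Lra Lia ZArith Arith List.
Open Scope R_scope.

Definition inA (s P M z : nat) : bool :=
  existsb (fun r => Nat.eqb z (s + r * P)) (seq 0 M).

Definition kGrover (theta : R) : nat := Z.to_nat (Int_part (PI / (4 * theta))).

Definition a_k (M : nat) (theta : R) (k : nat) : R :=
  / sqrt (INR M) * sin ((2 * INR k + 1) * theta).
Definition b_k (N M : nat) (theta : R) (k : nat) : R :=
  / sqrt (INR N - INR M) * cos ((2 * INR k + 1) * theta).

Definition psi (N s P M : nat) (theta : R) (k z : nat) : R :=
  if inA s P M z then a_k M theta k else b_k N M theta k.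

(* omega^(z y) = exp(-2 pi i z y / N) = cos(-2 pi z y/N) + i sin(-2 pi z y/N) *)
Definition om_re (N z y : nat) : R := cos (- 2 * PI * INR (z * y) / INR N).
Definition om_im (N z y : nat) : R := sin (- 2 * PI * INR (z * y) / INR N).

Definition sumN (N : nat) (f : nat -> R) : R :=
  fold_right Rplus 0 (map f (seq 0 N)).

Definition phi_re (N s P M : nat) (theta : R) (k y : nat) : R :=
  / sqrt (INR N) * sumN N (fun z => psi N s P M theta k z * om_re N z y).
Definition phi_im (N s P M : nat) (theta : R) (k y : nat) : R :=
  / sqrt (INR N) * sumN N (fun z => psi N s P M theta k z * om_im N z y).

Definition Prob (N s P M : nat) (theta : R) (k y : nat) : R :=
  (phi_re N s P M theta k y) ^ 2 + (phi_im N s P M theta k y) ^ 2.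

(* Main.v *)
Require Import Defs.
From Stdlib Require Import Reals Lra Lia ZArith Arith List.
Open Scope R_scope.

Lemma sNS n f : sumN (S n) f = sumN n f + f n.
Proof. unfold sumN. rewrite seq_S, map_app, fold_right_app. simpl.
  induction (seq 0 n) as [|a l IH]; simpl; [ring| rewrite IH; ring]. Qed.

Lemma sN0 f : sumN 0 f = 0. Proof. reflexivity. Qed.

Lemma sN_ext n f g : (forall i, (i < n)%nat -> f i = g i) -> sumN n f = sumN n g.
Proof. induction n; intros H; [reflexivity|]. rewrite !sNS, IHn, H; auto. Qed.

Lemma sN_plus n f g : sumN n (fun i => f i + g i) = sumN n f + sumN n g.
Proof. induction n; [rewrite ?sN0; simpl; ring|]. rewrite !sNS, IHn; ring. Qed.

Lemma sN_scal n c f : sumN n (fun i => c * f i) = c * sumN n f.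
Proof. induction n; [rewrite ?sN0; simpl; ring|]. rewrite !sNS, IHn; ring. Qed.

Lemma sN_const n c : sumN n (fun _ => c) = INR n * c.
Proof. induction n; [rewrite ?sN0; simpl; ring|]. rewrite !sNS, IHn, S_INR; ring. Qed.

Lemma sN_single n c h : sumN n (fun z => if Nat.eqb z c then h z else 0) =
  if Nat.ltb c n then h c else 0.
Proof. induction n; [reflexivity|]. rewrite sNS, IHn.
  destruct (Nat.eqb n c) eqn:E1; destruct (Nat.ltb c n) eqn:E2; destruct (Nat.ltb c (S n)) eqn:E3;
  rewrite ?Nat.eqb_eq, ?Nat.eqb_neq, ?Nat.ltb_lt, ?Nat.ltb_ge in *; subst; try lia; ring. Qed.

Lemma inA_S s P M z : inA s P (S M) z = (inA s P M z || Nat.eqb z (s + M * P))%bool.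
Proof. unfold inA. rewrite seq_S, existsb_app. simpl. rewrite Bool.orb_false_r. reflexivity. Qed.

Lemma inA_last s P M : (1 <= P)%nat -> inA s P M (s + M * P) = false.
Proof. intros HP. unfold inA. apply Bool.not_true_iff_false. intros H.
  apply existsb_exists in H. destruct H as [r [Hr E]]. apply in_seq in Hr.
  apply Nat.eqb_eq in E. nia. Qed.

Lemma sum_inA N s P M h : (1 <= P)%nat -> (forall r, (r < M)%nat -> (s + r * P < N)%nat) ->
  sumN N (fun z => if inA s P M z then h z else 0) = sumN M (fun r => h (s + r * P)%nat).
Proof. intros HP. induction M; intros HB.
  - rewrite sN0. rewrite (sN_ext N _ (fun _ => 0)). rewrite sN_const; ring. intros; reflexivity.
  - rewrite sNS, <- IHM by (intros; apply HB; lia).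
    assert (Hc : (s + M * P < N)%nat) by (apply HB; lia).
    rewrite <- (Nat.ltb_lt) in Hc.
    transitivity (sumN N (fun z => (if inA s P M z then h z else 0) + (if Nat.eqb z (s + M*P) then h z else 0))).
    + apply sN_ext. intros z _. rewrite inA_S.
      destruct (Nat.eqb z (s + M * P)) eqn:E.
      * apply Nat.eqb_eq in E. subst. rewrite inA_last by auto. simpl. ring.
      * rewrite Bool.orb_false_r. ring.
    + rewrite sN_plus, sN_single, Hc. reflexivity.
Qed.

Lemma tele_cos n x c : 2 * sin (x/2) * sumN n (fun j => cos (INR j * x + c)) =
  sin ((INR n - /2) * x + c) - sin (c - x/2).
Proof. induction n.
  - rewrite sN0. simpl. replace ((0 - /2) * x + c) with (c - x/2) by field. ring.
  - rewrite sNS, Rmult_plus_distr_l, IHn, S_INR.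
    set (u := INR n * x + c).
    replace ((INR n + 1 - /2) * x + c) with (u + x/2) by (unfold u; field).
    replace ((INR n - /2) * x + c) with (u - x/2) by (unfold u; field).
    rewrite sin_plus, sin_minus. ring. Qed.

Lemma tele_sin n x c : 2 * sin (x/2) * sumN n (fun j => sin (INR j * x + c)) =
  cos (c - x/2) - cos ((INR n - /2) * x + c).
Proof. induction n.
  - rewrite sN0. simpl. replace ((0 - /2) * x + c) with (c - x/2) by field. ring.
  - rewrite sNS, Rmult_plus_distr_l, IHn, S_INR.
    set (u := INR n * x + c).
    replace ((INR n + 1 - /2) * x + c) with (u + x/2) by (unfold u; field).
    replace ((INR n - /2) * x + c) with (u - x/2) by (unfold u; field).
    rewrite (cos_plus u), (cos_minus u). ring. Qed.

Lemma geo_mod n x c : sin (x/2) <> 0 ->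
  (sumN n (fun j => cos (INR j * x + c)))^2 + (sumN n (fun j => sin (INR j * x + c)))^2
  = sin (INR n * x / 2) ^ 2 / sin (x/2) ^ 2.
Proof. intros Hs.
  set (C := sumN n _). set (S := sumN n _).
  pose proof (tele_cos n x c) as E1. pose proof (tele_sin n x c) as E2. fold C in E1. fold S in E2.
  set (al := (INR n - /2) * x + c) in *. set (be := c - x/2) in *.
  assert (Hd : (2*sin (x/2))^2 * (C^2+S^2) = 2 - 2 * cos (al - be)).
  { rewrite cos_minus. replace ((2*sin (x/2))^2 * (C^2+S^2)) with ((2 * sin (x/2) * C)^2 + (2*sin (x/2) * S)^2) by ring.
    rewrite E1, E2. pose proof (sin2_cos2 al). pose proof (sin2_cos2 be). unfold Rsqr in *. nra. }
  replace (al - be) with (2 * (INR n * x / 2)) in Hd by (unfold al, be; field).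
  rewrite cos_2a_sin in Hd.
  apply (Rmult_eq_reg_l ((2*sin (x/2))^2)). rewrite Hd. field. auto.
  apply pow_nonzero. intro H. apply Hs. lra. Qed.

Lemma sin_nz m N : (0 < N)%nat -> (m mod N <> 0)%nat -> sin (PI * INR m / INR N) <> 0.
Proof. intros HN Hm H. apply sin_eq_0_0 in H. destruct H as [k Hk].
  apply Hm. assert (HNr : INR N <> 0) by (apply not_0_INR; lia).
  pose proof PI_RGT_0 as HPI.
  assert (E0 : INR m = (PI * INR m / INR N) * INR N / PI) by (field; split; lra).
  rewrite Hk in E0. replace (IZR k * PI * INR N / PI) with (IZR k * INR N) in E0 by (field; lra).
  rewrite !INR_IZR_INZ, <- mult_IZR in E0. apply eq_IZR in E0.
  apply Nat2Z.inj. rewrite Nat2Z.inj_mod, E0. simpl. apply Z_mod_mult.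
Qed.

Lemma sin_z m N : (0 < N)%nat -> (m mod N = 0)%nat -> sin (PI * INR m / INR N) = 0.
Proof. intros HN Hm. apply sin_eq_0_1. exists (Z.of_nat (m / N)).
  rewrite <- INR_IZR_INZ. rewrite (Nat.div_mod m N) at 1 by lia. rewrite Hm, Nat.add_0_r, mult_INR.
  field. apply not_0_INR; lia. Qed.

Lemma decomp N s P M theta k g : (1 <= P)%nat -> (forall r, (r < M)%nat -> (s + r * P < N)%nat) ->
  sumN N (fun z => psi N s P M theta k z * g z) =
  b_k N M theta k * sumN N g + (a_k M theta k - b_k N M theta k) * sumN M (fun r => g (s + r * P)%nat).
Proof. intros HP HB.
  rewrite <- (sN_scal M), <- (sum_inA N s P M (fun z => (a_k M theta k - b_k N M theta k) * g z)) by auto.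
  rewrite <- (sN_scal N), <- sN_plus. apply sN_ext. intros z _. unfold psi.
  destruct (inA s P M z); ring. Qed.

Theorem mainTheorem1 (N s P M : nat) (theta : R)
  (HN : (2 <= N)%nat) (HP : (1 <= P)%nat) (HM1 : (1 <= M)%nat) (HMN : (M < N)%nat)
  (HA : (s + (M - 1) * P <= N - 1)%nat)
  (Hth0 : 0 < theta) (Hth1 : theta < PI / 2)
  (Hsin : sin theta = sqrt (INR M / INR N))
  (y : nat) (Hy : (y < N)%nat) :
  let k := kGrover theta in
  let pr := Prob N s P M theta k y in
  (y = 0%nat -> pr = (cos (2 * INR k * theta)) ^ 2) /\
  ((P * y) mod N = 0%nat -> y <> 0%nat ->
     pr = (tan theta) ^ 2 * (sin (2 * INR k * theta)) ^ 2) /\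
  ((P * y) mod N <> 0%nat -> (M * P * y) mod N <> 0%nat ->
     pr = / (INR M) ^ 2 * (tan theta) ^ 2 * (sin (2 * INR k * theta)) ^ 2
          * (sin (PI * INR (M * P * y) / INR N)) ^ 2
          / (sin (PI * INR (P * y) / INR N)) ^ 2) /\
  ((P * y) mod N <> 0%nat -> (M * P * y) mod N = 0%nat -> pr = 0).
Proof.
  intros k pr.
  assert (HB : forall r, (r < M)%nat -> (s + r * P < N)%nat) by (intros; nia).
  assert (HNp : 0 < INR N) by (apply lt_0_INR; lia).
  assert (HMp : 0 < INR M) by (apply lt_0_INR; lia).
  assert (HNM : 0 < INR N - INR M) by (apply Rlt_Rminus, lt_INR; lia).
  set (u := sqrt (INR M)). set (v := sqrt (INR N - INR M)). set (w := sqrt (INR N)).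
  assert (Hu : 0 < u) by (apply sqrt_lt_R0; auto).
  assert (Hv : 0 < v) by (apply sqrt_lt_R0; auto).
  assert (Hw : 0 < w) by (apply sqrt_lt_R0; auto).
  assert (Hu2 : u * u = INR M) by (apply sqrt_sqrt; lra).
  assert (Hv2 : v * v = INR N - INR M) by (apply sqrt_sqrt; lra).
  assert (Hw2 : w * w = INR N) by (apply sqrt_sqrt; lra).
  assert (HS : sin theta = u / w) by (rewrite Hsin; apply sqrt_div_alt; auto).
  assert (HC : cos theta = v / w).
  { assert (Hc0 : 0 < cos theta) by (apply cos_gt_0; lra).
    pose proof (sin2_cos2 theta) as E. unfold Rsqr in E. rewrite HS in E.
    assert (E2 : (cos theta * w) * (cos theta * w) = v * v).
    { rewrite Hv2, <- Hw2, <- Hu2. replace (cos theta * w * (cos theta * w)) with ((cos theta * cos theta) * (w * w)) by ring.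
      replace (cos theta * cos theta) with (1 - u/w*(u/w)) by lra. field. lra. }
    assert (Hp : 0 < cos theta * w) by (apply Rmult_lt_0_compat; lra).
    assert (E3 : cos theta * w = v) by nra. rewrite <- E3. field. lra. }
  assert (HT : tan theta = u / v) by (unfold tan; rewrite HS, HC; field; lra).
  set (T := (2 * INR k + 1) * theta).
  assert (Hs2 : sin (2 * INR k * theta) = sin T * (v/w) - cos T * (u/w)).
  { replace (2 * INR k * theta) with (T - theta) by (unfold T; ring). rewrite sin_minus, HS, HC. ring. }
  assert (Hc2 : cos (2 * INR k * theta) = cos T * (v/w) + sin T * (u/w)).
  { replace (2 * INR k * theta) with (T - theta) by (unfold T; ring). rewrite cos_minus, HS, HC. ring. }
  assert (Ha : a_k M theta k = / u * sin T) by reflexivity.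
  assert (Hb : b_k N M theta k = / v * cos T) by reflexivity.
  set (a := a_k M theta k) in *. set (b := b_k N M theta k) in *.
  set (FC := sumN N (fun z => om_re N z y)). set (FS := sumN N (fun z => om_im N z y)).
  set (AC := sumN M (fun r => om_re N (s + r * P) y)). set (AS := sumN M (fun r => om_im N (s + r * P) y)).
  assert (Hpr : pr = (/ w * (b * FC + (a - b) * AC))^2 + (/ w * (b * FS + (a - b) * AS))^2).
  { unfold pr, Prob, phi_re, phi_im. rewrite !decomp by auto. reflexivity. }
  clearbody pr.
  assert (Hgen : y <> 0%nat -> pr = (a - b)^2 / (w*w) * (AC^2 + AS^2)).
  { intros Hy0.
    set (x0 := -2 * PI * INR y / INR N).
    assert (EC : FC = sumN N (fun j => cos (INR j * x0 + 0))).
    { apply sN_ext; intros z _. unfold om_re, x0. f_equal. rewrite mult_INR. field. lra. }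
    assert (ES : FS = sumN N (fun j => sin (INR j * x0 + 0))).
    { apply sN_ext; intros z _. unfold om_im, x0. f_equal. rewrite mult_INR. field. lra. }
    assert (Hx0 : sin (x0 / 2) <> 0).
    { replace (x0/2) with (- (PI * INR y / INR N)) by (unfold x0; field; lra).
      rewrite sin_neg. apply Ropp_neq_0_compat. apply sin_nz. lia. rewrite Nat.mod_small; auto. }
    pose proof (geo_mod N x0 0 Hx0) as G. rewrite <- EC, <- ES in G.
    replace (sin (INR N * x0 / 2)) with 0 in G.
    2: { symmetry. apply sin_eq_0_1. exists (- Z.of_nat y)%Z. rewrite opp_IZR, <- INR_IZR_INZ.
         unfold x0. field. lra. }
    assert (FC = 0 /\ FS = 0) as [-> ->].
    { assert (FC^2 + FS^2 = 0) by (rewrite G; field; auto). nra. }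
    rewrite Hpr. field. lra. }
  set (x := -2 * PI * INR (P * y) / INR N). set (c := -2 * PI * INR (s * y) / INR N).
  assert (EAC : AC = sumN M (fun j => cos (INR j * x + c))).
  { apply sN_ext; intros z _. unfold om_re, x, c. f_equal. rewrite !mult_INR, plus_INR, mult_INR. field. lra. }
  assert (EAS : AS = sumN M (fun j => sin (INR j * x + c))).
  { apply sN_ext; intros z _. unfold om_im, x, c. f_equal. rewrite !mult_INR, plus_INR, mult_INR. field. lra. }
  assert (K : (a - b)^2 / (w*w) = / (INR M)^2 * (u/v)^2 * (sin T * (v/w) - cos T * (u/w))^2).
  { rewrite Ha, Hb, <- Hu2. field. lra. }
  assert (HCD : (P * y) mod N <> 0%nat ->
     pr = / (INR M) ^ 2 * (tan theta) ^ 2 * (sin (2 * INR k * theta)) ^ 2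
          * (sin (PI * INR (M * P * y) / INR N)) ^ 2
          / (sin (PI * INR (P * y) / INR N)) ^ 2).
  { intros Hpy. assert (Hy0 : y <> 0%nat) by (intro; subst; rewrite Nat.mul_0_r, Nat.mod_0_l in Hpy; lia).
    rewrite (Hgen Hy0).
    assert (Hx : sin (x / 2) <> 0).
    { replace (x/2) with (- (PI * INR (P*y) / INR N)) by (unfold x; field; lra).
      rewrite sin_neg. apply Ropp_neq_0_compat. apply sin_nz; auto; lia. }
    rewrite EAC, EAS, geo_mod by auto.
    replace (x/2) with (- (PI * INR (P*y) / INR N)) by (unfold x; field; lra).
    replace (INR M * x / 2) with (- (PI * INR (M * P*y) / INR N)) by (unfold x; rewrite !mult_INR; field; lra).
    rewrite !sin_neg, HT, Hs2.
    replace (/ (INR M) ^ 2 * (u / v) ^ 2 * (sin T * (v / w) - cos T * (u / w)) ^ 2) with ((a - b)^2 / (w*w)) by (rewrite K; reflexivity).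
    field. split. lra. apply sin_nz; auto; lia. }
  split; [|split; [|split]].
  - intros ->.
    assert (EC : FC = INR N).
    { rewrite <- (Rmult_1_r (INR N)), <- sN_const. apply sN_ext. intros z _.
      unfold om_re. rewrite Nat.mul_0_r. simpl INR. replace (-2 * PI * 0 / INR N) with 0 by (field; lra). apply cos_0. }
    assert (ES : FS = 0).
    { rewrite <- (Rmult_0_r (INR N)), <- sN_const. apply sN_ext. intros z _.
      unfold om_im. rewrite Nat.mul_0_r. simpl INR. replace (-2 * PI * 0 / INR N) with 0 by (field; lra). apply sin_0. }
    assert (EAC0 : AC = INR M).
    { rewrite <- (Rmult_1_r (INR M)), <- sN_const. apply sN_ext. intros z _.
      unfold om_re. rewrite Nat.mul_0_r. simpl INR. replace (-2 * PI * 0 / INR N) with 0 by (field; lra). apply cos_0. }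
    assert (EAS0 : AS = 0).
    { rewrite <- (Rmult_0_r (INR M)), <- sN_const. apply sN_ext. intros z _.
      unfold om_im. rewrite Nat.mul_0_r. simpl INR. replace (-2 * PI * 0 / INR N) with 0 by (field; lra). apply sin_0. }
    rewrite Hpr, EC, ES, EAC0, EAS0, Hc2, Ha, Hb.
    rewrite <- Hu2, <- Hw2. replace (w * w) with (v * v + u * u) by lra. field. lra.
  - intros Hpy Hy0. rewrite (Hgen Hy0).
    set (q := (P * y / N)%nat). assert (Hq : (P * y = N * q)%nat) by (pose proof (Nat.div_mod (P*y) N); unfold q; lia).
    assert (E1 : AC = INR M * cos c).
    { rewrite EAC, <- sN_const. apply sN_ext. intros r _.
      rewrite <- (cos_period (INR r * x + c) (r*q)). f_equal. unfold x. rewrite Hq, !mult_INR. field. lra. }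
    assert (E2 : AS = INR M * sin c).
    { rewrite EAS, <- sN_const. apply sN_ext. intros r _.
      rewrite <- (sin_period (INR r * x + c) (r*q)). f_equal. unfold x. rewrite Hq, !mult_INR. field. lra. }
    rewrite E1, E2, K, HT, Hs2.
    replace ((INR M * cos c) ^ 2 + (INR M * sin c) ^ 2) with (INR M ^ 2 * ((sin c)² + (cos c)²)) by (unfold Rsqr; ring).
    rewrite sin2_cos2. field. lra.
  - intros H _; exact (HCD H).
  - intros Hpy Hm. rewrite (HCD Hpy). rewrite (sin_z (M * P * y) N) by (auto; lia).
    unfold Rdiv. rewrite (pow_i 2) by lia. ring.
Qed.
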